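(* Let $k\ge2$, $n\ge1$, and $A=\{0<1<\cdots<k-1\}$. Let $G\subseteq A^{k}$ be the set of the $k!$ words of length $k$ in which each letter of $A$ occurs exactly once, and let $\Gamma_{k,n}=G^{k^{n-1}}$ (the set of concatenations of $k^{n-1}$ words of $G$, repetitions allowed). Then the set of words $BW(M)$, as $M$ ranges over all de Bruijn sets of span $n$ over $A$, is exactly $\Gamma_{k,n}$.
   Context: A word is primitive if it is not a proper power of another word; a necklace is the set of conjugates ($xy\sim yx$) of a primitive word, its length being the common length of its words. A multiset $M=\{n_{1},\dots,n_{t}\}$ of necklaces is a de Bruijn set of span $n$ over $A$ if $|n_{1}|+\cdots+|n_{t}|=k^{n}$ and every word of $A^{n}$ is a prefix of some power of some word belonging to one of the $n_{i}$. Burrows–Wheeler map: with $l$ the lcm of the lengths of the necklaces in $M$, sort lexicographically the list of all words $v^{l/|v|}$, $v$ ranging over the words of each necklace of $M$ (with multiplicity); $BW(M)$ is the word formed by the last letters of these words, in this order. *)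

(* Defs.v *)
From mathcomp Require Import all_boot.
Set Implicit Arguments. Unset Strict Implicit. Unset Printing Implicit Defensive.

Definition word_over (k : nat) (w : seq nat) : bool := all (fun a => a < k) w.

Definition wpow (u : seq nat) (m : nat) : seq nat := flatten (nseq m u).

(* primitive: not a proper power of another word (the empty word is (nil)^2,
   hence not primitive) *)
Definition primitive (w : seq nat) : Prop :=
  ~ (exists (u : seq nat) (m : nat), 1 < m /\ w = wpow u m).

(* A necklace is represented by one of its (primitive) words v; the words of
   the necklace are the conjugates of v, i.e. its rotations rot i v, i < |v|
   (pairwise distinct since v is primitive). *)
Definition necklace_words (v : seq nat) : seq (seq nat) :=
  [seq rot i v | i <- iota 0 (size v)].

(* A multiset of necklaces is a list M of representatives (primitive words).
   De Bruijn set of span n over A (|A| = k). *)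
Definition deBruijn_set (k n : nat) (M : seq (seq nat)) : Prop :=
  (forall v, v \in M -> primitive v /\ word_over k v) /\
  sumn [seq size v | v <- M] = k ^ n /\
  (forall u : seq nat, size u = n -> word_over k u ->
     exists v, v \in M /\ exists w, w \in necklace_words v /\
       exists m, prefix u (wpow w m)).

Fixpoint lexle (s t : seq nat) : bool :=
  match s, t with
  | [::], _ => true
  | _ :: _, [::] => false
  | a :: s', b :: t' => (a < b) || ((a == b) && lexle s' t')
  end.

Definition BW (M : seq (seq nat)) : seq nat :=
  let l := foldr lcmn 1 [seq size v | v <- M] in
  let ws := flatten [seq [seq wpow w (l %/ size v) | w <- necklace_words v]
                    | v <- M] in
  [seq last 0 w | w <- sort lexle ws].

Definition Gk (k : nat) (w : seq nat) : bool := perm_eq w (iota 0 k).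

Definition Gamma (k n : nat) (w : seq nat) : Prop :=
  exists ws : seq (seq nat),
    size ws = k ^ (n - 1) /\ all (Gk k) ws /\ w = flatten ws.

(* Main.v *)
Require Import Defs.
From mathcomp Require Import all_boot.
Set Implicit Arguments. Unset Strict Implicit. Unset Printing Implicit Defensive.


Lemma lexle_refl s : lexle s s.
Proof. by elim: s => //= a s ->; rewrite eqxx orbT. Qed.

Lemma lexle_total : total lexle.
Proof.
elim=> [|a s IH] [|b t] //=.
case: (ltngtP a b) => //= ->; rewrite eqxx /=; try exact: IH.
Qed.

Lemma lexle_trans : transitive lexle.
Proof.
move=> t s u; elim: s t u => [|a s IH] [|b t] [|c u] //=.
case/orP=> [ba|/andP[/eqP-> ts]]; case/orP=> [ac|/andP[/eqP<- su]].
- by rewrite (ltn_trans ba ac).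
- by rewrite ba.
- by rewrite ac.
- by rewrite eqxx (IH _ _ ts su) orbT.
Qed.

Lemma lexle_anti : antisymmetric lexle.
Proof.
elim=> [|a s IH] [|b t] //=; case/andP.
case/orP=> [ab|/andP[/eqP-> st]]; case/orP=> [ba|/andP[/eqP ba ts]].
- by move: (ltn_trans ab ba); rewrite ltnn.
- by move: ab; rewrite ba ltnn.
- by move: ba; rewrite ltnn.
- by rewrite (IH t) // st ts.
Qed.

Lemma lexle_nth1 s t : size s = size t -> lexle s t ->
  forall i, i < size s -> (forall j, j < i -> nth 0 s j = nth 0 t j) ->
  nth 0 s i <= nth 0 t i.
Proof.
elim: s t => [|a s IH] [|b t] //= [st] /orP[ab|/andP[/eqP-> le]] [|i] //= Hi H.
- exact: ltnW.
- by move: (H 0 erefl) => /= ab'; move: ab; rewrite ab' ltnn.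
- by apply: IH => // j ji; apply: (H j.+1).
Qed.

Lemma lexle_nth2 s t : size s = size t ->
  (forall i, i < size s -> (forall j, j < i -> nth 0 s j = nth 0 t j) ->
  nth 0 s i <= nth 0 t i) -> lexle s t.
Proof.
elim: s t => [|a s IH] [|b t] //= [st] H.
have ab : a <= b by apply: (H 0).
rewrite leq_eqVlt in ab; case/orP: ab => [/eqP ab|->//].
rewrite ab eqxx /=; apply/orP; right; apply: IH => // i Hi Hj.
apply: (H i.+1) => // -[|j] //= ji; exact: Hj.
Qed.

Lemma lexle_cat p q x y : size p = size q ->
  lexle (p ++ x) (q ++ y) = if p == q then lexle x y else lexle p q.
Proof.
elim: p q => [|a p IH] [|b q] //= [pq].
rewrite eqseq_cons IH //.
case: (ltngtP a b) => ab /=; rewrite ?andbF //.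
Qed.

Lemma wpowS u m : wpow u m.+1 = u ++ wpow u m.
Proof. by []. Qed.

Lemma wpowSr u m : wpow u m.+1 = wpow u m ++ u.
Proof.
elim: m => [|m IH]; first by rewrite /wpow /= cats0.
by rewrite [LHS]wpowS {1}IH catA -wpowS.
Qed.

Lemma size_wpow u m : size (wpow u m) = m * size u.
Proof. by elim: m => [|m IH] //; rewrite wpowS size_cat IH mulSn. Qed.

Lemma nth_wpow u m j : j < m * size u ->
  nth 0 (wpow u m) j = nth 0 u (j %% size u).
Proof.
elim: m j => [|m IH] j //; rewrite mulSn wpowS nth_cat => Hj.
case: ltnP => ju; first by rewrite modn_small.
rewrite IH; last by rewrite -(ltn_add2l (size u)) subnKC.
by rewrite -{2}(subnK ju) modnDr.
Qed.

Lemma wpow_rcons_cat b x m : wpow (rcons b x) m ++ b = b ++ wpow (x :: b) m.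
Proof.
elim: m => [|m IH]; first by rewrite cats0.
by rewrite !wpowS -catA IH cat_rcons.
Qed.

Lemma rotr1_wpow u m : rotr 1 (wpow u m) = wpow (rotr 1 u) m.
Proof.
case: m => [|m]; first by [].
case/lastP: u => [|b x]; first by rewrite /wpow; elim: m => // m /= ->.
rewrite rotr1_rcons.
by rewrite wpowSr -rcons_cat rotr1_rcons wpow_rcons_cat.
Qed.

Definition pre (n : nat) (X : seq nat) : seq nat :=
  mkseq (fun i => nth 0 X (i %% size X)) n.

Lemma size_pre n X : size (pre n X) = n.
Proof. exact: size_mkseq. Qed.

Lemma nth_pre n X i : i < n -> nth 0 (pre n X) i = nth 0 X (i %% size X).
Proof. exact: nth_mkseq. Qed.

Lemma pre_mono n X Y : size X = size Y -> 0 < size X -> lexle X Y ->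
  lexle (pre n X) (pre n Y).
Proof.
move=> sXY X0 le; apply: lexle_nth2; rewrite ?size_pre // => i Hi Hj.
rewrite !nth_pre // -sXY.
case: (ltnP i (size X)) => iX.
  rewrite modn_small //; apply: lexle_nth1 => // j ji.
  have := Hj j ji; rewrite !nth_pre ?(ltn_trans ji) // -sXY modn_small //.
  exact: ltn_trans ji iX.
suff -> : X = Y by [].
apply: (@eq_from_nth _ 0) => // j jX.
have jn : j < n by apply: leq_trans jX (leq_trans iX (ltnW Hi)).
by have := Hj j (leq_trans jX iX); rewrite !nth_pre // -sXY modn_small.
Qed.

Lemma pre_rotr n X : 0 < size X ->
  pre n.+1 (rotr 1 X) = last 0 X :: pre n X.
Proof.
case/lastP: X => [|b x] // _.
rewrite rotr1_rcons last_rcons.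
apply: (@eq_from_nth _ 0).
  by rewrite size_pre /= size_pre.
move=> [|i]; rewrite size_pre => Hi.
  by rewrite nth_pre //= mod0n.
rewrite nth_pre //= nth_pre // size_rcons.
rewrite -addn1 -modnDml.
have : i %% (size b).+1 < (size b).+1 by rewrite ltn_mod.
rewrite ltnS leq_eqVlt => /orP[/eqP ->|ib].
  by rewrite addn1 modnn nth_rcons ltnn eqxx.
rewrite addn1 modn_small //= nth_rcons ib //.
Qed.


Fixpoint dg (k m j : nat) : seq nat :=
  if m is m'.+1 then rcons (dg k m' (j %/ k)) (j %% k) else [::].

Definition valk (k : nat) (u : seq nat) : nat := foldl (fun acc a => acc * k + a) 0 u.

Section Digits.
Variable k : nat.
Hypothesis k0 : 0 < k.

Lemma size_dg m j : size (dg k m j) = m.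
Proof. by elim: m j => [|m IH] j //=; rewrite size_rcons IH. Qed.

Lemma dg_lt m j : all (fun a => a < k) (dg k m j).
Proof. by elim: m j => [|m IH] j //=; rewrite all_rcons ltn_mod k0 IH. Qed.

Lemma val_rcons u a : valk k (rcons u a) = valk k u * k + a.
Proof. by rewrite /valk foldl_rcons. Qed.

Lemma val_lt u : all (fun a => a < k) u -> valk k u < k ^ size u.
Proof.
elim/last_ind: u => [|u a IH] //; rewrite all_rcons => /andP[ak au].
rewrite val_rcons size_rcons expnSr.
apply: (@leq_trans ((valk k u).+1 * k)); first by rewrite mulSn addnC ltn_add2r.
by rewrite leq_mul2r IH // orbT.
Qed.

Lemma dg_val u : all (fun a => a < k) u -> dg k (size u) (valk k u) = u.
Proof.
elim/last_ind: u => [|u a IH] //; rewrite all_rcons => /andP[ak au].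
rewrite size_rcons /= val_rcons divnMDl // divn_small // addn0 IH //.
by rewrite modnMDl modn_small.
Qed.

Lemma val_dg m j : j < k ^ m -> valk k (dg k m j) = j.
Proof.
elim: m j => [|m IH] j /=; first by rewrite expn0 ltnS leqn0 => /eqP->.
move=> jlt; rewrite val_rcons IH; first by rewrite -divn_eq.
by rewrite ltn_divLR // -expnSr.
Qed.

Lemma dg_inj m j j' : j < k ^ m -> j' < k ^ m -> dg k m j = dg k m j' -> j = j'.
Proof. by move=> lj lj' e; rewrite -(val_dg lj) -(val_dg lj') e. Qed.

Lemma dg_sorted m j j' : j <= j' -> j' < k ^ m -> lexle (dg k m j) (dg k m j').
Proof.
elim: m j j' => [|m IH] j j' //= jj' lj'.
rewrite -!cats1 lexle_cat ?size_dg //.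
have lj : j < k ^ m.+1 by apply: leq_ltn_trans lj'.
have lq : j %/ k < k ^ m by rewrite ltn_divLR // -expnSr.
have lq' : j' %/ k < k ^ m by rewrite ltn_divLR // -expnSr.
case: eqP => [e|_]; last by apply: IH => //; apply: leq_div2r.
have e' := dg_inj lq lq' e.
have h : j %% k <= j' %% k.
  by move: jj'; rewrite {1}(divn_eq j k) {1}(divn_eq j' k) e' leq_add2l.
by rewrite /= andbT orbC -leq_eqVlt.
Qed.

Definition E n := mkseq (dg k n) (k ^ n).

Lemma uniq_E n : uniq (E n).
Proof.
rewrite /E /mkseq map_inj_in_uniq ?iota_uniq // => j j'.
by rewrite !mem_iota !add0n; apply: dg_inj.
Qed.

Lemma sorted_E n : sorted lexle (E n).
Proof.
rewrite /E /mkseq sorted_map.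
apply: (@sub_in_sorted _ (fun j => j < k ^ n) ltn); last exact: iota_ltn_sorted.
  by move=> j j' _ lj' /= jj'; apply: dg_sorted => //; apply: ltnW.
by apply/allP => j; rewrite mem_iota.
Qed.

Lemma mem_E n u : (u \in E n) = (size u == n) && all (fun a => a < k) u.
Proof.
apply/idP/idP.
  by case/mapP => j _ ->; rewrite size_dg eqxx dg_lt.
case/andP => /eqP su au; apply/mapP; exists (valk k u).
  by rewrite mem_iota add0n -su val_lt.
by rewrite -su dg_val.
Qed.

Lemma size_E n : size (E n) = k ^ n.
Proof. exact: size_mkseq. Qed.

Lemma nth_E n j : j < k ^ n -> nth [::] (E n) j = dg k n j.
Proof. exact: nth_mkseq. Qed.

End Digits.

Lemma sort_pre k n l C : 0 < k -> 0 < l -> all (fun X => size X == l) C ->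
  perm_eq (map (pre n) C) (E k n) ->
  map (pre n) (sort lexle C) = E k n.
Proof.
move=> k0 l0 aC pC.
apply: (sorted_eq lexle_trans lexle_anti); last first.
- by apply: perm_trans pC; apply: perm_map; rewrite perm_sort.
- exact: sorted_E.
rewrite sorted_map.
apply: (@sub_in_sorted _ (fun X => size X == l) lexle).
- move=> X Y /eqP sX /eqP sY /= le; apply: pre_mono => //; first by rewrite sX sY.
  by rewrite sX.
- by rewrite (perm_all _ (permEl (perm_sort _ _))).
apply: (sort_sorted lexle_total).
Qed.

Lemma uniq_map_inj (T1 T2 : eqType) (f : T1 -> T2) s x y :
  uniq (map f s) -> x \in s -> y \in s -> f x = f y -> x = y.
Proof.
elim: s => [|z s IH] //= /andP[nz us].
rewrite !inE => /orP[/eqP->|xs] /orP[/eqP->|ys] // e.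
- by move: nz; rewrite e map_f.
- by move: nz; rewrite -e map_f.
- exact: IH.
Qed.

Lemma flatten_blocks (T : Type) (f : nat -> T) a b c :
  flatten [seq [seq f (i * b + r) | r <- iota 0 b] | i <- iota c a] =
  [seq f j | j <- iota (c * b) (a * b)].
Proof.
elim: a c => [|a IH] c //=.
rewrite IH mulSn iotaD map_cat; congr (_ ++ _).
  by rewrite -{2}(addn0 (c * b)) iotaDl -map_comp.
by rewrite addnC.
Qed.

Lemma perm_iota0 k s : uniq s -> all (fun a => a < k) s -> size s = k ->
  perm_eq s (iota 0 k).
Proof.
move=> us als ss; apply: uniq_perm => //; first exact: iota_uniq.
have [] := @uniq_min_size _ s (iota 0 k) us.
- by move=> x xs; rewrite mem_iota add0n (allP als).
- by rewrite size_iota ss.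
by [].
Qed.


Lemma pre_S n X : pre n.+1 X = rcons (pre n X) (nth 0 X (n %% size X)).
Proof. exact: mkseqS. Qed.

Lemma dvd_foldr_lcm x s : x \in s -> x %| foldr lcmn 1 s.
Proof.
elim: s => [|y s IH] //=; rewrite inE => /orP[/eqP->|xs].
  exact: dvdn_lcml.
exact: dvdn_trans (IH xs) (dvdn_lcmr _ _).
Qed.

Lemma foldr_lcm_gt0 s : all (fun x => 0 < x) s -> 0 < foldr lcmn 1 s.
Proof. by elim: s => [|y s IH] //= /andP[y0 /IH]; rewrite lcmn_gt0 y0. Qed.

Lemma rotr1_rot (v : seq nat) t : t < size v ->
  exists2 t', t' < size v & rotr 1 (rot t v) = rot t' v.
Proof.
case: t => [|t] tv.
  exists (size v - 1); last by rewrite rot0.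
  by rewrite subn1 prednK // ltn_predL.
exists t; first exact: ltnW.
by rewrite rotS ?rotK // ltnW.
Qed.

Section Forward.
Variables (k n : nat) (M : seq (seq nat)).
Hypotheses (hk : 2 <= k) (hn : 1 <= n) (HM : deBruijn_set k n M).

Let k0 : 0 < k. Proof. exact: ltnW. Qed.

Let l := foldr lcmn 1 [seq size v | v <- M].
Let C := flatten [seq [seq wpow w (l %/ size v) | w <- necklace_words v] | v <- M].

Lemma BW_eq : BW M = map (last 0) (sort lexle C).
Proof. by []. Qed.

Lemma M_gt0 v : v \in M -> 0 < size v.
Proof.
case: HM => H _ /H [pv _]; rewrite lt0n; apply/negP => /eqP/size0nil v0.
by apply: pv; exists [::], 2; rewrite v0.
Qed.

Lemma M_dvd v : v \in M -> size v %| l.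
Proof. by move=> vM; apply: dvd_foldr_lcm; apply: map_f. Qed.

Lemma l_gt0 : 0 < l.
Proof. by apply: foldr_lcm_gt0; apply/allP => x /mapP[v vM ->]; apply: M_gt0. Qed.

Lemma memC X : X \in C <->
  exists2 v, v \in M & exists2 t, t < size v & X = wpow (rot t v) (l %/ size v).
Proof.
split.
  case/flattenP => s /mapP[v vM ->] /mapP[w /mapP[t]].
  by rewrite mem_iota add0n => tv -> ->; exists v => //; exists t.
case=> v vM [t tv ->]; apply/flattenP; exists [seq wpow w (l %/ size v) | w <- necklace_words v].
  by apply/mapP; exists v.
by apply/mapP; exists (rot t v) => //; apply/mapP; exists t; rewrite // mem_iota.
Qed.

Lemma sizeC X : X \in C -> size X = l.
Proof.
case/memC => v vM [t tv ->].
by rewrite size_wpow size_rot divnK // M_dvd.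
Qed.

Lemma size_C : size C = k ^ n.
Proof.
case: HM => _ [<- _]; rewrite size_flatten /shape -map_comp.
by congr sumn; apply: eq_map => v /=; rewrite !size_map size_iota.
Qed.

Lemma rotrC X : X \in C -> rotr 1 X \in C.
Proof.
case/memC => v vM [t tv ->]; rewrite rotr1_wpow.
have [t' t'v ->] := rotr1_rot tv.
by apply/memC; exists v => //; exists t'.
Qed.

Lemma coverC u : u \in E k n -> u \in map (pre n) C.
Proof.
rewrite mem_E // => /andP[/eqP su au].
case: HM => _ [_ /(_ u su au) [v [vM [w [wv [m pu]]]]]].
move: wv => /mapP[t]; rewrite mem_iota add0n => tv wE.
apply/mapP; exists (wpow w (l %/ size v)).
  by apply/memC; exists v => //; exists t; rewrite // wE.
have sw : size w = size v by rewrite wE size_rot.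
have v0 := M_gt0 vM.
have sX : size (wpow w (l %/ size v)) = l by rewrite size_wpow sw divnK // M_dvd.
move: pu => /prefixP[s us].
have sum : n <= size (wpow w m) by rewrite us size_cat su leq_addr.
apply: (@eq_from_nth _ 0); first by rewrite size_pre.
move=> i Hi; rewrite nth_pre -?su // sX nth_wpow; last first.
  by rewrite sw divnK ?M_dvd // ltn_mod l_gt0.
rewrite sw (modn_dvdm i (M_dvd vM)).
have -> : nth 0 u i = nth 0 (wpow w m) i by rewrite us nth_cat Hi.
rewrite nth_wpow ?sw //.
by apply: leq_trans Hi _; rewrite su -sw -size_wpow.
Qed.

Lemma permC : perm_eq (map (pre n) C) (E k n).
Proof.
have hs : size (map (pre n) C) <= size (E k n) by rewrite size_map size_C size_E.
have [s1 s2] := @uniq_min_size _ (E k n) (map (pre n) C) (uniq_E k0 n) coverC hs.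
rewrite perm_sym; apply: uniq_perm => //; first exact: uniq_E.
by rewrite (uniq_size_uniq (uniq_E k0 n) s2) s1.
Qed.

Lemma uniq_preC : uniq (map (pre n) C).
Proof. by rewrite (perm_uniq permC) uniq_E. Qed.

Let S := sort lexle C.

Lemma preS : map (pre n) S = E k n.
Proof.
apply: (sort_pre k0 l_gt0) => //; last exact: permC.
by apply/allP => X /sizeC ->.
Qed.

Lemma size_S : size S = k ^ n.
Proof. by rewrite size_sort size_C. Qed.

Lemma nthS_C j : j < k ^ n -> nth [::] S j \in C.
Proof. by move=> jl; rewrite -(perm_mem (permEl (perm_sort lexle C))) mem_nth // size_S. Qed.

Lemma pre_nthS j : j < k ^ n -> pre n (nth [::] S j) = dg k n j.
Proof. by move=> jl; rewrite -(nth_E jl) -preS (nth_map [::]) // size_S. Qed.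

Section Block.
Variable i : nat.
Hypothesis hi : i < k ^ (n - 1).

Let kn : k ^ n = k ^ (n - 1) * k.
Proof. by rewrite -expnSr subn1 prednK. Qed.

Lemma jlt r : r < k -> i * k + r < k ^ n.
Proof.
move=> rk; rewrite kn; apply: (@leq_trans (i * k + k)); first by rewrite ltn_add2l.
by rewrite -mulSnr leq_mul2r hi orbT.
Qed.

Let a r := last 0 (nth [::] S (i * k + r)).

Lemma pre_rot r : r < k -> pre n (rotr 1 (nth [::] S (i * k + r))) = a r :: dg k (n - 1) i.
Proof.
move=> rk; have jl := jlt rk.
have XC := nthS_C jl.
have sX : 0 < size (nth [::] S (i * k + r)) by rewrite (sizeC XC) l_gt0.
have e : n = (n - 1).+1 by rewrite subn1 prednK.
have := pre_nthS jl; rewrite [in pre _ _]e [in dg _ _ _]e pre_S /= => /rcons_inj[e1 _].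
rewrite [in pre _ (rotr _ _)]e pre_rotr // e1 divnMDl // divn_small // addn0.
by [].
Qed.

Lemma a_inj : {in iota 0 k &, injective a}.
Proof.
move=> r r'; rewrite !mem_iota !add0n => rk r'k e.
have := pre_rot rk; rewrite e -(pre_rot r'k) => /(uniq_map_inj uniq_preC).
move=> /(_ (rotrC (nthS_C (jlt rk))) (rotrC (nthS_C (jlt r'k)))) /rotr_inj e2.
have := pre_nthS (jlt rk); rewrite e2 pre_nthS ?jlt // => /dg_inj.
by move=> /(_ k0 (jlt r'k) (jlt rk)) /eqP; rewrite eqn_add2l => /eqP.
Qed.

Lemma a_lt r : r < k -> a r < k.
Proof.
move=> rk; have h := map_f (pre n) (rotrC (nthS_C (jlt rk))).
rewrite pre_rot // (perm_mem permC) (mem_E k0) in h.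
by case/andP: h => _ /andP[].
Qed.

Lemma block_perm : Gk k [seq a r | r <- iota 0 k].
Proof.
apply: perm_iota0; last by rewrite size_map size_iota.
  by rewrite map_inj_in_uniq ?iota_uniq //; apply: a_inj.
apply/allP => x /mapP[r]; rewrite mem_iota add0n => rk ->; exact: a_lt.
Qed.

End Block.

Lemma forward : Gamma k n (BW M).
Proof.
exists [seq [seq last 0 (nth [::] S (i * k + r)) | r <- iota 0 k] | i <- iota 0 (k ^ (n - 1))].
split; first by rewrite size_map size_iota.
split.
  apply/allP => x /mapP[i]; rewrite mem_iota add0n => hi ->.
  exact: block_perm.
rewrite (flatten_blocks (fun j => last 0 (nth [::] S j))) mul0n.
rewrite -expnSr subn1 prednK // BW_eq -/S.
by rewrite -{1}(mkseq_nth [::] S) size_S /mkseq -map_comp.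
Qed.

End Forward.


Lemma nth_flatten_blk b (ws : seq (seq nat)) i r :
  all (fun s => size s == b) ws -> r < b ->
  nth 0 (flatten ws) (i * b + r) = nth 0 (nth [::] ws i) r.
Proof.
elim: ws i => [|s ws IH] i /=; first by move=> _ _; rewrite !nth_nil.
case/andP => /eqP sb aws rb; rewrite nth_cat sb.
case: i => [|i]; first by rewrite mul0n add0n rb.
rewrite mulSn -addnA ltnNge leq_addr /= addKn IH //.
Qed.

Lemma size_flatten_blk b (ws : seq (seq nat)) :
  all (fun s => size s == b) ws -> size (flatten ws) = size ws * b.
Proof.
elim: ws => [|s ws IH] //= /andP[/eqP sb aws].
by rewrite size_cat IH // sb mulSn.
Qed.

Lemma Gamma_dec k n w : Gamma k n w -> size w = k ^ (n - 1) * k /\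
  forall i, i < k ^ (n - 1) ->
    perm_eq [seq nth 0 w (i * k + r) | r <- iota 0 k] (iota 0 k).
Proof.
case=> ws [sws [aws ->]].
have szs : all (fun s => size s == k) ws.
  apply/allP => s /(allP aws) /perm_size; rewrite size_iota => ->; exact: eqxx.
split; first by rewrite (size_flatten_blk szs) sws.
move=> i hi.
have -> : [seq nth 0 (flatten ws) (i * k + r) | r <- iota 0 k] = nth [::] ws i.
  have si : size (nth [::] ws i) = k by apply/eqP/(allP szs)/mem_nth; rewrite sws.
  rewrite -[RHS](mkseq_nth 0 (nth [::] ws i)) si /mkseq.
  apply/eq_in_map => r; rewrite mem_iota add0n => rk.
  exact: nth_flatten_blk.
by apply: (allP aws); apply: mem_nth; rewrite sws.
Qed.

Section Backward.
Variables (k n : nat) (w : seq nat).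
Hypotheses (hk : 2 <= k) (hn : 1 <= n) (hsw : size w = k ^ n)
  (hb : forall i, i < k ^ (n - 1) ->
    perm_eq [seq nth 0 w (i * k + r) | r <- iota 0 k] (iota 0 k)).

Let k0 : 0 < k. Proof. exact: ltnW. Qed.
Let N := k ^ n.
Let kn : k ^ n = k ^ (n - 1) * k.
Proof. by rewrite -expnSr subn1 prednK. Qed.
Let en : n = (n - 1).+1.
Proof. by rewrite subn1 prednK. Qed.

Lemma jdec j : j < N -> j %/ k < k ^ (n - 1).
Proof. by rewrite ltn_divLR // -kn. Qed.

Lemma nth_blk j : j < N ->
  nth 0 w j = nth 0 [seq nth 0 w (j %/ k * k + r) | r <- iota 0 k] (j %% k).
Proof.
move=> jN; rewrite (nth_map 0) ?size_iota ?ltn_mod //.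
by rewrite nth_iota ?ltn_mod // add0n -divn_eq.
Qed.

Lemma w_lt j : j < N -> nth 0 w j < k.
Proof.
move=> jN; have := hb (jdec jN).
move/perm_mem => pm.
have : nth 0 w j \in [seq nth 0 w (j %/ k * k + r) | r <- iota 0 k].
  by rewrite (nth_blk jN) mem_nth // size_map size_iota ltn_mod.
by rewrite pm mem_iota.
Qed.

Definition pi j := valk k (nth 0 w j :: dg k (n - 1) (j %/ k)).

Lemma all_pi j : j < N -> all (fun a => a < k) (nth 0 w j :: dg k (n - 1) (j %/ k)).
Proof. by move=> jN; rewrite /= w_lt // dg_lt. Qed.

Lemma size_pi j : size (nth 0 w j :: dg k (n - 1) (j %/ k)) = n.
Proof. by rewrite /= size_dg -en. Qed.

Lemma dg_pi j : j < N -> dg k n (pi j) = nth 0 w j :: dg k (n - 1) (j %/ k).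
Proof. by move=> jN; rewrite -{1}(size_pi j) dg_val // all_pi. Qed.

Lemma pi_lt j : j < N -> pi j < N.
Proof. by move=> jN; rewrite /N -(size_pi j) val_lt // all_pi. Qed.

Lemma pi_inj j j' : j < N -> j' < N -> pi j = pi j' -> j = j'.
Proof.
move=> jN j'N e; have := dg_pi jN; rewrite e dg_pi // => -[ew ed].
have eq := dg_inj k0 (jdec jN) (jdec j'N) (esym ed).
have u := perm_uniq (hb (jdec jN)); rewrite iota_uniq in u.
have := nth_uniq 0 (s := [seq nth 0 w (j %/ k * k + r) | r <- iota 0 k]) (i := j %% k) (j := j' %% k).
rewrite size_map size_iota !ltn_mod k0 u -nth_blk // eq -nth_blk // ew eqxx.
move=> /(_ erefl erefl erefl) /esym /eqP em.
by rewrite (divn_eq j k) (divn_eq j' k) eq em.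
Qed.

Definition piT (x : 'I_N) : 'I_N := Ordinal (pi_lt (ltn_ord x)).

Lemma piT_inj : injective piT.
Proof. by move=> x y e; apply: val_inj; apply: (pi_inj (ltn_ord x) (ltn_ord y)); exact: (congr1 val e). Qed.

Definition rho := finv piT.

Lemma rho_inj : injective rho. Proof. exact: finv_inj piT_inj. Qed.

Lemma dg_rho (x : 'I_N) : dg k n x = nth 0 w (rho x) :: dg k (n - 1) (rho x %/ k).
Proof.
have := congr1 val (f_finv piT_inj x); rewrite /= -/rho => <-.
by rewrite dg_pi.
Qed.

Lemma shift x i : i.+1 < n -> nth 0 (dg k n (rho x)) i = nth 0 (dg k n x) i.+1.
Proof.
move=> hi; rewrite (dg_rho x) /= [in dg k n (rho x)]en /= nth_rcons size_dg.
have hi' : i < n - 1 by rewrite ltn_subRL add1n.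
by rewrite hi'.
Qed.

Definition c (x : 'I_N) := nth 0 (dg k n x) 0.

Lemma c_rho x : c x = nth 0 w (rho x).
Proof. by rewrite /c dg_rho. Qed.

Lemma c_iter x i : i < n -> c (iter i rho x) = nth 0 (dg k n x) i.
Proof.
elim: i x => [|i IH] x hi //.
by rewrite iterSr IH ?shift // ltnW.
Qed.

Let L x := order rho x.

Definition word x := map c (orbit rho x).

Lemma size_word x : size (word x) = L x.
Proof. by rewrite size_map size_orbit. Qed.

Lemma L_gt0 x : 0 < L x.
Proof. exact: order_gt0. Qed.

Lemma iter_mul x q : iter (q * L x) rho x = x.
Proof.
elim: q => [|q IH] //; rewrite mulSn iterD IH; exact: iter_order rho_inj x.
Qed.

Lemma iter_mod x i : iter i rho x = iter (i %% L x) rho x.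
Proof. by rewrite {1}(divn_eq i (L x)) addnC iterD iter_mul. Qed.

Lemma nth_word x i : nth 0 (word x) (i %% L x) = c (iter i rho x).
Proof.
rewrite (nth_map x) ?size_orbit ?ltn_mod ?L_gt0 //.
by rewrite nth_traject ?ltn_mod ?L_gt0 // -iter_mod.
Qed.

Lemma order_iter x t : L (iter t rho x) = L x.
Proof.
elim: t => [|t IH] //; rewrite iterS /L.
by rewrite (order_id_cycle (cycle_orbit rho_inj _)).
Qed.

Lemma orbit_rho x : orbit rho (rho x) = rot 1 (orbit rho x).
Proof.
rewrite /orbit (order_id_cycle (cycle_orbit rho_inj x)).
have e : order rho x = (order rho x).-1.+1 by rewrite orderSpred.
rewrite e [in RHS]trajectS rot1_cons [in LHS]trajectSr -iterSr -e iter_order //.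
exact: rho_inj.
Qed.

Lemma orbit_iter x t : t < L x -> orbit rho (iter t rho x) = rot t (orbit rho x).
Proof.
elim: t => [|t IH] ht; first by rewrite rot0.
rewrite iterS orbit_rho IH ?(ltnW ht) // -rotS // size_orbit; exact: ltnW.
Qed.

Lemma word_iter x t : t < L x -> word (iter t rho x) = rot t (word x).
Proof. by move=> ht; rewrite /word orbit_iter // map_rot. Qed.

Let csym : connect_sym (frel rho) := fconnect_sym rho_inj.

Let R := [seq x <- enum 'I_N | froots rho x].

Definition Mb := [seq word r | r <- R].

Let l := foldr lcmn 1 [seq size v | v <- Mb].

Lemma root_R x : froot rho x \in R.
Proof. by rewrite mem_filter mem_enum andbT; apply: roots_root. Qed.

Lemma R_root r : r \in R -> froot rho r = r.
Proof. by rewrite mem_filter => /andP[/eqP]. Qed.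

Lemma conn_root x : fconnect rho (froot rho x) x.
Proof. by rewrite csym; apply: connect_root. Qed.

Lemma iter_root x : iter (findex rho (froot rho x) x) rho (froot rho x) = x.
Proof. exact: iter_findex (conn_root x). Qed.

Lemma L_root x : L (froot rho x) = L x.
Proof. by rewrite -{2}(iter_root x) order_iter. Qed.

Lemma L_dvd x : L x %| l.
Proof.
rewrite -L_root -size_word; apply: dvd_foldr_lcm.
by apply: map_f; apply: map_f; apply: root_R.
Qed.

Lemma lb_gt0 : 0 < l.
Proof.
apply: foldr_lcm_gt0; apply/allP => z /mapP[v /mapP[r _ ->] ->].
by rewrite size_word L_gt0.
Qed.

Definition X x := wpow (word x) (l %/ L x).

Lemma size_X x : size (X x) = l.
Proof. by rewrite size_wpow size_word divnK // L_dvd. Qed.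

Lemma pre_X x : pre n (X x) = dg k n x.
Proof.
apply: (@eq_from_nth _ 0); first by rewrite size_pre size_dg.
move=> i; rewrite size_pre => hi.
rewrite nth_pre // size_X nth_wpow; last by rewrite size_word divnK ?L_dvd // ltn_mod lb_gt0.
by rewrite size_word (modn_dvdm i (L_dvd x)) nth_word c_iter.
Qed.

Lemma last_X x : last 0 (X x) = nth 0 w x.
Proof.
have q0 : 0 < l %/ L x by rewrite divn_gt0 ?L_gt0 // dvdn_leq ?lb_gt0 // L_dvd.
rewrite /X -(prednK q0) wpowSr last_cat.
have -> : last (last 0 (wpow (word x) (l %/ L x).-1)) (word x) = last 0 (word x).
  by rewrite /word /orbit -orderSpred trajectS.
rewrite -nth_last size_word.
have hL := L_gt0 x.
rewrite -(@modn_small (L x).-1 (L x)); last by rewrite ltn_predL.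
rewrite nth_word c_rho -iterS prednK // iter_order //; exact: rho_inj.
Qed.

Let O := flatten [seq orbit rho r | r <- R].
Let C := flatten [seq [seq wpow w' (l %/ size v) | w' <- necklace_words v] | v <- Mb].

Lemma traject_map (x : 'I_N) m : traject rho x m = [seq iter t rho x | t <- iota 0 m].
Proof.
apply: (@eq_from_nth _ x); first by rewrite size_traject size_map size_iota.
move=> i; rewrite size_traject => hi.
by rewrite nth_traject // (nth_map 0) ?size_iota // nth_iota.
Qed.

Lemma C_eq : C = map X O.
Proof.
rewrite /C /O map_flatten /Mb -!map_comp; congr flatten; apply: eq_map => r /=.
rewrite /necklace_words -map_comp [orbit rho r]/orbit traject_map -map_comp size_word.
apply/eq_in_map => t; rewrite mem_iota add0n => ht /=.
by rewrite /X word_iter // order_iter.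
Qed.

Lemma O_count y : count_mem y O = 1.
Proof.
rewrite count_flatten -map_comp.
have -> : [seq (count_mem y \o orbit rho) r | r <- R] =
          [seq nat_of_bool (r == froot rho y) | r <- R].
  apply/eq_in_map => r rR /=.
  by rewrite count_uniq_mem ?orbit_uniq // -fconnect_orbit -root_connect // R_root.
rewrite sumn_count.
have -> : count (fun r => r == froot rho y) R = count_mem (froot rho y) R by [].
by rewrite count_uniq_mem ?root_R // filter_uniq // enum_uniq.
Qed.

Lemma memO y : y \in O.
Proof. by rewrite -has_pred1 has_count O_count. Qed.

Lemma O_perm : perm_eq O (enum 'I_N).
Proof.
apply: uniq_perm; last by move=> y; rewrite memO mem_enum.
  by apply: count_mem_uniq => y; rewrite O_count memO.
exact: enum_uniq.
Qed.

Lemma size_O : size O = N.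
Proof. by rewrite (perm_size O_perm) size_enum_ord. Qed.

Lemma sum_Mb : sumn [seq size v | v <- Mb] = k ^ n.
Proof.
transitivity (size O); last exact: size_O.
rewrite /O size_flatten /shape /Mb -!map_comp.
by congr sumn; apply: eq_map => r /=; rewrite size_word size_orbit.
Qed.

Lemma permCb : perm_eq (map (pre n) C) (E k n).
Proof.
rewrite C_eq -map_comp.
have -> : E k n = [seq (pre n \o X) x | x <- enum 'I_N].
  rewrite /E /mkseq -val_enum_ord -map_comp; apply: eq_map => x /=.
  by rewrite pre_X.
exact: perm_map O_perm.
Qed.

Lemma BW_Mb : BW Mb = w.
Proof.
have -> : BW Mb = map (last 0) (sort lexle C) by [].
set S := sort lexle C.
have pS : map (pre n) S = E k n.
  apply: (sort_pre k0 lb_gt0) => //; last exact: permCb.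
  by apply/allP => Y; rewrite C_eq => /mapP[x _ ->]; rewrite size_X.
have sS : size S = N by rewrite size_sort C_eq size_map size_O.
apply: (@eq_from_nth _ 0); first by rewrite size_map sS hsw.
move=> j; rewrite size_map sS => jN.
rewrite (nth_map [::]) ?sS //.
have : nth [::] S j \in C.
  by rewrite -(perm_mem (permEl (perm_sort lexle C))) mem_nth // sS.
rewrite C_eq => /mapP[x _ ex].
have : pre n (nth [::] S j) = dg k n j by rewrite -(nth_E jN) -pS (nth_map [::]) // sS.
rewrite ex pre_X => /(dg_inj k0 (ltn_ord x) jN) ej.
by rewrite last_X ej.
Qed.

Lemma prim x : primitive (word x).
Proof.
move=> [u [m [m1 e]]].
have Le : L x = m * size u by rewrite -size_word e size_wpow.
have d0 : 0 < size u by move: (L_gt0 x); rewrite Le muln_gt0 => /andP[].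
have dL : size u < L x by rewrite Le ltn_Pmull.
have dvd : size u %| L x by rewrite Le dvdn_mull.
have per i : nth 0 (word x) (i %% L x) = nth 0 u (i %% size u).
  by rewrite e nth_wpow ?(modn_dvdm i dvd) // -Le ltn_mod L_gt0.
have it : iter (size u) rho x = x.
  apply: val_inj; apply: (dg_inj k0 (ltn_ord _) (ltn_ord _)).
  apply: (@eq_from_nth _ 0); first by rewrite !size_dg.
  move=> i; rewrite size_dg => hi.
  by rewrite -!c_iter // -iterD -!nth_word !per modnDr.
have := findex_iter dL; rewrite it findex0 => e0.
by move: d0; rewrite -e0.
Qed.

Lemma word_over_w x : word_over k (word x).
Proof.
apply/allP => a /mapP[y _ ->]; rewrite /c; apply: (allP (dg_lt k0 n y)).
by apply: mem_nth; rewrite size_dg.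
Qed.

Lemma cover u : size u = n -> word_over k u ->
  exists v, v \in Mb /\ exists w', w' \in necklace_words v /\
    exists m, prefix u (wpow w' m).
Proof.
move=> su au.
have hu : valk k u < N by rewrite /N -su val_lt.
pose x : 'I_N := Ordinal hu.
have dx : dg k n x = u by rewrite /= -su dg_val.
exists (word (froot rho x)); split; first by apply: map_f; exact: root_R.
exists (word x); split.
  apply/mapP; exists (findex rho (froot rho x) x).
    by rewrite mem_iota add0n size_word findex_max // conn_root.
  by rewrite -word_iter ?iter_root // findex_max // conn_root.
exists n; rewrite prefixE; apply/eqP.
have sz : n <= size (wpow (word x) n).
  by rewrite size_wpow size_word leq_pmulr // L_gt0.
apply: (@eq_from_nth _ 0); first by rewrite size_takel su.
rewrite size_takel su // => i hi.
rewrite nth_take // nth_wpow; last by rewrite -size_wpow; apply: leq_trans sz.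
by rewrite size_word nth_word c_iter // dx.
Qed.

Lemma deBruijn_Mb : deBruijn_set k n Mb.
Proof.
split; first by move=> v /mapP[r _ ->]; split; [exact: prim | exact: word_over_w].
split; first exact: sum_Mb.
exact: cover.
Qed.

End Backward.

Unset Implicit Arguments.

Theorem theorem3p4 (k n : nat) (hk : 2 <= k) (hn : 1 <= n) (w : seq nat) :
  (exists M : seq (seq nat), deBruijn_set k n M /\ BW M = w) <-> Gamma k n w.
Proof.
split.
  by case=> M [HM <-]; apply: forward.
move=> hG; have [sw hb] := Gamma_dec hG.
have hsw : size w = k ^ n by rewrite sw -expnSr subn1 prednK.
exists (@Mb k n w hk hn hb); split.
  exact: deBruijn_Mb.
exact: BW_Mb.
Qed.
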